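(* Let $d\le r$, $G\in\mathbb{R}^{r\times d}$, $Y\in\mathbb{R}^{r\times d}$ with $Y^\top Y=I_d$, and $A = \tfrac12(G^\top Y + Y^\top G)$. Then $$\mathrm{tr}(A)^2 - \|A\|_F^2 \le \|G\|_*^2 - \|G\|_F^2,$$ where $\|\cdot\|_*$ is the nuclear norm and $\|\cdot\|_F$ the Frobenius norm. *)

(* Defs.v *)
From HB Require Import structures.
From mathcomp Require Import all_boot all_order all_algebra.
Set Implicit Arguments. Unset Strict Implicit. Unset Printing Implicit Defensive.
Import Order.TTheory GRing.Theory Num.Theory.
Local Open Scope ring_scope.

Definition frob2 (R : rcfType) (m n : nat) (M : 'M[R]_(m, n)) : R :=
  \sum_(i < m) \sum_(j < n) M i j ^+ 2.

(* [sv_of G s]: s is the vector of singular values of G (d <= r), i.e.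
   G admits a (thin) singular value decomposition G = U diag(s) V^T with
   U^T U = I_d, V^T V = I_d and s >= 0 entrywise. *)
Definition sv_of (R : rcfType) (r d : nat) (G : 'M[R]_(r, d)) (s : 'rV[R]_d) : Prop :=
  (forall i, 0 <= s 0 i) /\
  exists (U : 'M[R]_(r, d)) (V : 'M[R]_d),
    U^T *m U = 1%:M /\ V^T *m V = 1%:M /\ G = U *m diag_mx s *m V^T.

Definition nuc_of (R : rcfType) (d : nat) (s : 'rV[R]_d) : R := \sum_(i < d) s 0 i.

(* Main.v *)
Require Import Defs.
From HB Require Import structures.
From mathcomp Require Import all_boot all_order all_algebra.
From mathcomp Require Import ring lra.
Import Order.TTheory GRing.Theory Num.Theory.
Local Open Scope ring_scope.

Section S.
Variable R : rcfType.

Lemma trace_mul m n (P : 'M[R]_(m,n)) (Q : 'M[R]_(n,m)) :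
  \tr (P *m Q) = \sum_i \sum_j P i j * Q j i.
Proof. by rewrite /mxtrace; apply: eq_bigr => i _; rewrite mxE. Qed.

Lemma frob2_tr m n (M : 'M[R]_(m,n)) : frob2 M = \tr (M *m M^T).
Proof.
rewrite trace_mul /frob2; apply: eq_bigr => i _; apply: eq_bigr => j _.
by rewrite mxE expr2.
Qed.

Lemma trC m n (P : 'M[R]_(m,n)) (Q : 'M[R]_(n,m)) : \tr (P *m Q) = \tr (Q *m P).
Proof.
rewrite !trace_mul exchange_big; apply: eq_bigr => i _; apply: eq_bigr => j _.
exact: mulrC.
Qed.

Lemma col_norm m n (N : 'M[R]_(m,n)) j : (N^T *m N) j j = \sum_k N k j ^+ 2.
Proof. by rewrite mxE; apply: eq_bigr => k _; rewrite mxE expr2. Qed.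

Lemma pair_ineq (a b x y p q : R) : 0 <= a -> 0 <= b ->
  x ^+ 2 + q ^+ 2 <= 1 -> y ^+ 2 + p ^+ 2 <= 1 ->
  a * x * (b * y) - 2^-1 * (a * p) ^+ 2 - 2^-1 * ((a * p) * (b * q)) +
  (b * y * (a * x) - 2^-1 * (b * q) ^+ 2 - 2^-1 * ((b * q) * (a * p))) <= a * b + b * a.
Proof.
move=> ha hb h1 h2.
have hab : 0 <= a * b by apply: mulr_ge0.
have hxy : x * y <= 1 by nra.
have : 0 <= (a * p + b * q) ^+ 2 by apply: sqr_ge0.
have : 0 <= a * b * (1 - x * y) by apply: mulr_ge0; lra.
nra.
Qed.
Lemma key d (s : 'I_d -> R) (c : 'I_d -> 'I_d -> R) (hs : forall i, 0 <= s i)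
  (hc : forall i j, i != j -> c j j ^+ 2 + c i j ^+ 2 <= 1) :
  (\sum_i s i * c i i) ^+ 2 - 2^-1 * (\sum_i \sum_j (s i * c i j) ^+ 2
     + \sum_i \sum_j (s i * c i j) * (s j * c j i))
  <= (\sum_i s i) ^+ 2 - \sum_i s i ^+ 2.
Proof.
pose f i j := s i * c i i * (s j * c j j) - 2^-1 * (s i * c i j) ^+ 2
   - 2^-1 * ((s i * c i j) * (s j * c j i)).
pose g (i j : 'I_d) := s i * s j - (if i == j then s i ^+ 2 else 0).
have -> : (\sum_i s i * c i i) ^+ 2 - 2^-1 * (\sum_i \sum_j (s i * c i j) ^+ 2
     + \sum_i \sum_j (s i * c i j) * (s j * c j i)) = \sum_i \sum_j f i j.
  rewrite expr2 mulr_suml mulrDr !mulr_sumr opprD addrA -!sumrB.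
  apply: eq_bigr => i _; rewrite mulr_sumr !mulr_sumr -!sumrB.
  by apply: eq_bigr => j _.
have -> : (\sum_i s i) ^+ 2 - \sum_i s i ^+ 2 = \sum_i \sum_j g i j.
  rewrite expr2 mulr_suml -sumrB; apply: eq_bigr => i _.
  rewrite mulr_sumr /g sumrB; congr (_ - _).
  rewrite -big_mkcond /=. under eq_bigl do rewrite eq_sym. by rewrite (big_pred1_eq _ i).
suff H : \sum_i \sum_j f i j + \sum_i \sum_j f i j <=
         \sum_i \sum_j g i j + \sum_i \sum_j g i j by lra.
rewrite {2}(exchange_big _ _ _ _ _ f) {2}(exchange_big _ _ _ _ _ g) /=.
rewrite -!big_split /=; apply: ler_sum => i _; rewrite -!big_split /=.
apply: ler_sum => j _; rewrite /f /g.
have [<-|nij] := eqVneq i j.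
  lra.
rewrite !subr0.
apply: pair_ineq => //; first by apply: hc; rewrite eq_sym.
exact: hc.
Qed.
End S.

Theorem lemmaB3 (R : rcfType) (r d : nat) (hdr : (d <= r)%N)
  (G Y : 'M[R]_(r, d)) (hY : Y^T *m Y = 1%:M) (s : 'rV[R]_d) (hs : sv_of G s) :
  let A : 'M[R]_d := 2^-1 *: (G^T *m Y + Y^T *m G) in
  (\tr A) ^+ 2 - frob2 A <= (nuc_of s) ^+ 2 - frob2 G.
Proof.
cbv zeta; set A := 2^-1 *: _; case: hs => hs0 [U [V [hU [hV hG]]]].
set S := diag_mx s.
have hVV : V *m V^T = 1%:M by apply: mulmx1C.
have hST : S^T = S := tr_diag_mx s.
pose C := U^T *m Y *m V.
pose T := S *m C.
set M := G^T *m Y.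
have hM : M = V *m T *m V^T.
  rewrite /M hG !trmx_mul trmxK hST /T /C.
  by rewrite !mulmxA -(mulmxA _ V) hVV mulmx1.
have hTdef : T = S *m C by [].
have hCdef : C = U^T *m Y *m V by [].
clearbody T C.
have hA : A = 2^-1 *: (M + M^T) by rewrite /A /M trmx_mul trmxK.
have etr : \tr M = \tr T.
  by rewrite hM trC !mulmxA hV mul1mx.
have trconj (X : 'M[R]_d) : \tr (V *m X *m V^T) = \tr X.
  by rewrite trC mulmxA hV mul1mx.
have e1 : \tr (M *m M^T) = \tr (T *m T^T).
  rewrite -[RHS]trconj hM !trmx_mul trmxK !mulmxA -(mulmxA _ V^T V) hV mulmx1.
  reflexivity.
have e2 : \tr (M *m M) = \tr (T *m T).
  rewrite -[RHS]trconj hM !mulmxA -(mulmxA _ V^T V) hV mulmx1.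
  reflexivity.
have e3 : \tr (M^T *m M^T) = \tr (M *m M) by rewrite -trmx_mul mxtrace_tr.
have e4 : \tr (M^T *m M) = \tr (M *m M^T) by rewrite trC.
have trA : \tr A = \tr T.
  rewrite hA mxtraceZ mxtraceD mxtrace_tr etr; field; done.
have hAsym : A^T = A.
  by rewrite hA; apply/matrixP => i j; rewrite !mxE addrC.
have frA : frob2 A = 2^-1 * (\tr (T *m T^T) + \tr (T *m T)).
  rewrite frob2_tr hAsym.
  have -> : A *m A = (2^-1 * 2^-1) *: ((M + M^T) *m (M + M^T)).
    by rewrite hA -scalemxAl -scalemxAr scalerA.
  rewrite mxtraceZ mulmxDl !mulmxDr !mxtraceD e3 e4 e1 e2; field; done.
have frG : frob2 G = \tr (S *m S).
  rewrite frob2_tr hG !trmx_mul trmxK hST !mulmxA -(mulmxA _ V^T V) hV mulmx1.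
  rewrite trC !mulmxA hU mul1mx; reflexivity.
have hcol : forall j, \sum_k C k j ^+ 2 <= 1.
  move=> j.
  pose Z := Y *m V.
  have hZ : Z^T *m Z = 1%:M.
    by rewrite /Z trmx_mul !mulmxA -(mulmxA _ Y^T Y) hY mulmx1 hV.
  pose P := 1%:M - U *m U^T.
  have hCZ : C = U^T *m Z by rewrite hCdef /Z mulmxA.
  have hPt : P^T = P by rewrite /P linearB /= trmx1 trmx_mul trmxK.
  have hPP : P *m P = P.
    rewrite /P mulmxBl mul1mx mulmxBr mulmx1 !mulmxA -(mulmxA U U^T U) hU mulmx1.
    by rewrite subrr subr0.
  have hsum : C^T *m C + (P *m Z)^T *m (P *m Z) = 1%:M.
    rewrite trmx_mul hPt -mulmxA (mulmxA P P Z) hPP /P mulmxBl mul1mx mulmxBr hZ.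
    rewrite hCZ trmx_mul trmxK !mulmxA.
    by rewrite addrC subrK.
  have := congr1 (fun X : 'M[R]_d => X j j) hsum.
  rewrite /= mxE !col_norm mxE eqxx /= => H.
  have : 0 <= \sum_k (P *m Z) k j ^+ 2 by apply: sumr_ge0 => k _; apply: sqr_ge0.
  lra.
have hc : forall i j, i != j -> C j j ^+ 2 + C i j ^+ 2 <= 1.
  move=> i j nij; have := hcol j.
  rewrite (bigD1 j) //= (bigD1 i) ?nij //=.
  have : 0 <= \sum_(k | (k != j) && (k != i)) C k j ^+ 2.
    by apply: sumr_ge0 => k _; apply: sqr_ge0.
  lra.
have hTe : forall i j, T i j = s 0 i * C i j.
  by move=> i j; rewrite hTdef mul_diag_mx mxE.
have t1 : \tr T = \sum_i s 0 i * C i i.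
  by rewrite /mxtrace; apply: eq_bigr => i _; rewrite hTe.
have t2 : \tr (T *m T^T) = \sum_i \sum_j (s 0 i * C i j) ^+ 2.
  rewrite trace_mul; apply: eq_bigr => i _; apply: eq_bigr => j _.
  by rewrite mxE hTe expr2.
have t3 : \tr (T *m T) = \sum_i \sum_j (s 0 i * C i j) * (s 0 j * C j i).
  rewrite trace_mul; apply: eq_bigr => i _; apply: eq_bigr => j _.
  by rewrite !hTe.
have t4 : \tr (S *m S) = \sum_i s 0 i ^+ 2.
  rewrite /mxtrace; apply: eq_bigr => i _.
  by rewrite /S mul_diag_mx !mxE eqxx mulr1n expr2.
rewrite trA frA frG t1 t2 t3 t4 /nuc_of.
exact: (@key R d (fun i => s 0 i) C hs0 hc).
Qed.
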